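(* Let $V$ be a finite-dimensional scalar product space and $T$ a self-adjoint operator on $V$. Let $\lambda$ be an eigenvalue of $T$, $U=T-\lambda I$, and suppose $x$ generates a cycle of generalized eigenvectors of length $p$ with eigenvalue $\lambda$ which is adapted to the scalar product with sign $\varepsilon$. Let $v_i=U^{p-i}x$ and $H=\operatorname{span}\{v_1,\dots,v_p\}$. For $0\le k\le p-1$ define the symmetric bilinear form $[y,w]_k=\langle U^k y,w\rangle$ on $H$. Then the number of zero entries in any diagonal representation of $[\cdot,\cdot]_k$ is $k$. If $\lambda\in\mathbb{R}$, then the number of negative entries in any diagonal representation of $[\cdot,\cdot]_k$ is $$\begin{cases}\lfloor\frac{(p-k)+1}{2}\rfloor&\text{if }\varepsilon=-1,\\ (p-k)-\lfloor\frac{(p-k)+1}{2}\rfloor&\text{if }\varepsilon=1.\end{cases}$$ In particular, the invariants of $[\cdot,\cdot]_k$ depend only on $p,k,\varepsilon$.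
   Context: A scalar product is a non-degenerate symmetric bilinear form $\langle\cdot,\cdot\rangle$ over $\mathbb{R}$ or $\mathbb{C}$ (bilinear in the complex case); if $V$ is real, non-real eigenvalues are handled in the complexification with the bilinear extension, while for real $\lambda$ the cycle lies in the real space $V$. $T$ is self-adjoint if $\langle Tx,y\rangle=\langle x,Ty\rangle$. $x$ generates a cycle of length $p$ if $p$ is minimal with $U^px=0$. The cycle is adapted to the scalar product with sign $\varepsilon$ if $v_1,\dots,v_p$ satisfy $\langle v_i,v_j\rangle=\varepsilon$ for $i+j=p+1$ and $0$ otherwise, where $\varepsilon\in\{\pm1\}$ if $\lambda\in\mathbb{R}$ and $\varepsilon=1$ if $\lambda\notin\mathbb{R}$. A diagonal representation of a symmetric bilinear form is a basis in which its matrix is diagonal. *)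

(* Defs.v *)
(* Vectors are ROW vectors 'rV[F]_n (MathComp convention:
   a matrix A acts by x |-> x *m A), the scalar product is given by its
   Gram matrix G : <x, y> = x *m G *m y^T. *)
From HB Require Import structures.
From mathcomp Require Import all_boot all_order all_algebra.
From mathcomp Require Import reals complex.
Set Implicit Arguments. Unset Strict Implicit. Unset Printing Implicit Defensive.
Import Order.TTheory GRing.Theory Num.Theory.
Local Open Scope ring_scope.

Section Defs.
Variables (F : fieldType) (n : nat).
Implicit Types (G A : 'M[F]_n) (x y w : 'rV[F]_n).

Definition bform G x y : F := (x *m G *m y^T) 0 0.

Definition scalar_product G : Prop := G^T = G /\ G \in unitmx.

Definition self_adjoint G A : Prop :=
  forall x y, bform G (x *m A) y = bform G x (y *m A).

Definition is_eigenvalue A (lam : F) : Prop :=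
  exists2 v : 'rV[F]_n, v != 0 & v *m A = lam *: v.

Definition Uop A (lam : F) : 'M[F]_n := A - lam%:M.

Definition gen_cycle A lam x (p : nat) : Prop :=
  x *m (Uop A lam) ^+ p = 0 /\
  forall q, (q < p)%N -> x *m (Uop A lam) ^+ q != 0.

(* v_i = U^(p-i) x, for i = 1..p ; indexed by j : 'I_p with i = j+1 *)
Definition cyc_vec A lam x p (j : 'I_p) : 'rV[F]_n :=
  x *m (Uop A lam) ^+ (p - j.+1).

Definition adapted G A lam x p (eps : F) : Prop :=
  (eps = 1 \/ eps = -1) /\
  forall i j : 'I_p, bform G (cyc_vec A lam x i) (cyc_vec A lam x j) =
     if (i.+1 + j.+1 == p.+1)%N then eps else 0.

(* matrix whose rows are v_1 .. v_p; its row space is H *)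
Definition Hmx A lam x p : 'M[F]_(p, n) := \matrix_(j < p) cyc_vec A lam x j.

Definition kform G A lam (k : nat) y w : F := bform G (y *m (Uop A lam) ^+ k) w.

Definition diag_rep G A lam x p k m (B : 'M[F]_(m, n)) : Prop :=
  row_free B /\ (B == Hmx A lam x p)%MS /\
  forall i j : 'I_m, i != j -> kform G A lam k (row i B) (row j B) = 0.

Definition nzeros G A lam k m (B : 'M[F]_(m, n)) : nat :=
  #|[set i : 'I_m | kform G A lam k (row i B) (row i B) == 0]|.

End Defs.

Definition nnegs (R : realFieldType) n (G A : 'M[R]_n) lam k m (B : 'M[R]_(m, n))
  : nat :=
  #|[set i : 'I_m | kform G A lam k (row i B) (row i B) < 0]|.

(* Main.v *)
Require Import Defs.
From HB Require Import structures.
From mathcomp Require Import all_boot all_order all_algebra.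
From mathcomp Require Import reals complex.
From mathcomp Require Import zify ring lra.
Import Order.TTheory GRing.Theory Num.Theory.
Set Implicit Arguments. Unset Strict Implicit. Unset Printing Implicit Defensive.
Local Open Scope ring_scope.

Section Gen.
Variable F : fieldType.

Lemma entry_form m1 m2 n (A : 'M[F]_(m1, n)) (M : 'M_n) (B : 'M_(m2, n)) i j :
  (A *m M *m B^T) i j = (row i A *m M *m (row j B)^T) 0 0.
Proof.
rewrite !mxE; apply: eq_bigr => l _; rewrite !mxE; congr (_ * _).
by apply: eq_bigr => r _; rewrite !mxE.
Qed.

Definition maskv m (P : pred 'I_m) : 'rV[F]_m := \row_i (P i)%:R.

Lemma mask_rank m (P : pred 'I_m) : \rank (diag_mx (maskv P)) = #|P|.
Proof.
pose f : 'I_#|P| -> 'I_m := @enum_val _ (mem P).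
pose E := rowsub f (1%:M : 'M[F]_m).
have rE : \rank E = #|P|.
  apply/eqP; rewrite eqn_leq rank_leq_row /=.
  have EE : E *m E^T = 1%:M.
    apply/matrixP => a b; rewrite !mxE.
    rewrite (bigD1 (f a)) //= big1 => [|l /negbTE Hl]; last by rewrite !mxE eq_sym Hl mul0r.
    by rewrite !mxE eqxx (inj_eq enum_val_inj) eq_sym mul1r addr0.
  apply: leq_trans (mxrankM_maxl _ E^T); by rewrite EE mxrank1.
rewrite -rE; apply/eqP; rewrite eqn_leq; apply/andP; split; apply: mxrankS.
  apply/row_subP => i; rewrite row_diag_mx mxE.
  case Pi: (P i); last by rewrite scale0r sub0mx.
  have Pi' : i \in mem P by [].
  rewrite scale1r -row1 -(enum_rankK_in Pi' Pi') -/(f _) -row_rowsub.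
  exact: row_sub.
apply/row_subP => a; rewrite row_rowsub row1.
have : f a \in mem P by apply: enum_valP.
rewrite -(scale1r 'e_(f a)) => Pfa.
have -> : (1 : F) = (maskv P) 0 (f a) by rewrite mxE; have -> : P (f a) by exact: Pfa.
rewrite -row_diag_mx; exact: row_sub.
Qed.

Lemma mask_rankM m n (P : pred 'I_m) (X : 'M[F]_(m, n)) :
  row_free X -> \rank (diag_mx (maskv P) *m X) = #|P|.
Proof. by move=> fX; rewrite mxrankMfree // mask_rank. Qed.

Lemma rank_diag m (d : 'rV[F]_m) :
  \rank (diag_mx d) = #|[pred i | d 0 i != 0]|.
Proof.
pose d' : 'rV[F]_m := \row_i (if d 0 i != 0 then d 0 i else 1).
pose d'' : 'rV[F]_m := \row_i (d' 0 i)^-1.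
have nz i : d' 0 i != 0 by rewrite mxE; case: ifP => // _; exact: oner_neq0.
have -> : diag_mx d = diag_mx (maskv [pred i | d 0 i != 0]) *m diag_mx d'.
  apply/matrixP => i j; rewrite mul_diag_mx !mxE.
  case: (eqVneq i j) => [->|nij]; last by rewrite !mulr0n mulr0.
  by rewrite !mulr1n /=; case: (eqVneq (d 0 j) 0) => [->|_]; rewrite ?mul0r ?mul1r.
apply: mask_rankM; rewrite row_free_unit.
have : diag_mx d' *m diag_mx d'' = 1%:M.
  apply/matrixP => i j; rewrite mul_diag_mx !mxE.
  case: (eqVneq i j) => [->|nij]; last by rewrite !mulr0n mulr0.
  by rewrite !mulr1n divff //; have := nz j; rewrite mxE.
by case/mulmx1_unit.
Qed.

End Gen.
Arguments maskv {F m} P.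


Lemma card_ge p k : #|[pred i : 'I_p | (k <= i)%N]| = (p - k)%N.
Proof.
rewrite -sum1_card.
have := sum_nat_const_nat k p 1; rewrite muln1 => <-.
rewrite big_geq_mkord /=; apply: eq_bigl => i; by rewrite /= inE.
Qed.

Lemma fk_lt p k (hk : (k < p)%N) (i : 'I_p) :
  ((if (k <= i)%N then p.-1 + k - i else k.-1 - i) < p)%N.
Proof. have := ltn_ord i; case: ifP => h; lia. Qed.

Definition fk p k (hk : (k < p)%N) (i : 'I_p) : 'I_p := Ordinal (fk_lt hk i).

Lemma fkK p k (hk : (k < p)%N) : involutive (fk hk).
Proof.
move=> i; apply: val_inj => /=; have := ltn_ord i.
case: (leqP k i) => ki /= ip.
  have -> : (k <= p.-1 + k - i)%N by lia.
  lia.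
have -> : (k <= k.-1 - i)%N = false by lia.
lia.
Qed.

Section Cyc.
Variable F : fieldType.

Definition Zk p k (hk : (k < p)%N) (eps : F) : 'M[F]_p :=
  \matrix_(i, j) (eps * (fk hk i == j)%:R).

Lemma Zk_unit p k (hk : (k < p)%N) (eps : F) : eps != 0 -> Zk hk eps \in unitmx.
Proof.
move=> e0.
have : Zk hk eps *m (eps^-2 *: Zk hk eps) = 1%:M.
  apply/matrixP => i j; rewrite !mxE.
  rewrite (bigD1 (fk hk i)) //= big1 => [|l /negbTE Hl]; last first.
    by rewrite !mxE eq_sym Hl mulr0 mul0r.
  rewrite !mxE fkK eqxx addr0 mulr1 (eq_sym i j).
  case: (j == i); rewrite ?mulr0 //= mulr1.
  by rewrite [eps ^- 2 * eps]mulrC mulrA -expr2 mulfV // expf_neq0.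
by case/mulmx1_unit.
Qed.

Definition Ck p k (hk : (k < p)%N) (eps : F) : 'M[F]_p :=
  diag_mx (maskv [pred i : 'I_p | (k <= i)%N]) *m Zk hk eps.

Lemma Ck_rank p k (hk : (k < p)%N) (eps : F) : eps != 0 ->
  \rank (Ck hk eps) = (p - k)%N.
Proof.
move=> e0; rewrite mask_rankM ?card_ge // row_free_unit; exact: Zk_unit.
Qed.

Lemma bform0 n (G : 'M[F]_n) w : bform G 0 w = 0.
Proof. by rewrite /bform !mul0mx mxE. Qed.

Lemma Hmx_Ck n (G A : 'M[F]_n) lam x p eps k (hk : (k < p)%N) :
  gen_cycle A lam x p -> adapted G A lam x p eps ->
  Hmx A lam x p *m ((Uop A lam) ^+ k *m G) *m (Hmx A lam x p)^T = Ck hk eps.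
Proof.
move=> [xp _] [_ ad]; apply/matrixP => i j.
have eU a b : Uop A lam ^+ a *m Uop A lam ^+ b = Uop A lam ^+ (a + b) by rewrite exprD mulmxE.
rewrite entry_form !rowK mulmxA.
rewrite [X in X = _](_ : _ = bform G (cyc_vec A lam x i *m Uop A lam ^+ k) (cyc_vec A lam x j)) //.
rewrite /Ck mul_diag_mx !mxE {1}/cyc_vec -mulmxA eU.
case: (leqP k i) => ki.
  have i'lt : (i - k < p)%N by have := ltn_ord i; lia.
  have -> : (p - i.+1 + k = p - (i - k).+1)%N by have := ltn_ord i; lia.
  rewrite -[(p - (i - k).+1)%N]/(p - (Ordinal i'lt).+1)%N.
  rewrite -/(cyc_vec A lam x (Ordinal i'lt)) ad /= ki mul1r.
  have -> : ((i - k).+1 + j.+1 == p.+1)%N = (fk hk i == j).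
    apply/eqP/eqP => [h|h]; first by apply: val_inj => /=; rewrite ki; have := ltn_ord i; have := ltn_ord j; lia.
    move: h => /(congr1 val) /=; rewrite ki; have := ltn_ord i; have := ltn_ord j; lia.
  by case: (fk hk i == j); rewrite ?mulr1 ?mulr0.
have -> : (p - i.+1 + k = p + (p - i.+1 + k - p))%N by have := ltn_ord i; lia.
by rewrite -eU mulmxA xp mul0mx bform0 /= leqNgt ki mul0r.
Qed.

Lemma eps_nz n (G A : 'M[F]_n) lam x p eps :
  adapted G A lam x p eps -> eps != 0.
Proof.
by case=> [[]->] _; rewrite ?oppr_eq0 oner_neq0.
Qed.

Lemma Hmx_free n (G A : 'M[F]_n) lam x p eps :
  gen_cycle A lam x p -> adapted G A lam x p eps -> (0 < p)%N ->
  row_free (Hmx A lam x p).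
Proof.
move=> gc ad p0; rewrite /row_free eqn_leq rank_leq_row /=.
have h1 : (\rank (Ck p0 eps) <= \rank (Hmx A lam x p))%N.
  rewrite -(Hmx_Ck p0 gc ad); exact: leq_trans (mxrankM_maxl _ _) (mxrankM_maxl _ _).
by rewrite Ck_rank ?subn0 ?(eps_nz ad) in h1.
Qed.

Lemma BMB n (G A : 'M[F]_n) lam k m (B : 'M[F]_(m, n)) :
  (forall i j : 'I_m, i != j -> kform G A lam k (row i B) (row j B) = 0) ->
  B *m ((Uop A lam) ^+ k *m G) *m B^T =
  diag_mx (\row_i kform G A lam k (row i B) (row i B)).
Proof.
move=> off; apply/matrixP => i j; rewrite entry_form [X in _ = X]mxE [X in _ = X *+ _]mxE.
case: (eqVneq i j) => [<-|nij]; rewrite ?mulr1n ?mulr0n.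
  by rewrite /kform /bform mulmxA.
by rewrite -(off _ _ nij) /kform /bform mulmxA.
Qed.

Lemma m_eq_p n (G A : 'M[F]_n) lam x p eps k m (B : 'M[F]_(m, n)) :
  gen_cycle A lam x p -> adapted G A lam x p eps -> (k < p)%N ->
  diag_rep G A lam x p k B -> m = p.
Proof.
move=> gc ad hk [fB [eB _]].
have : row_free (Hmx A lam x p) by apply: Hmx_free gc ad _; lia.
move: fB; rewrite /row_free (eqmx_rank eB) => /eqP -> /eqP ->. done.
Qed.

Lemma rank_congr_le m1 m2 n (B : 'M[F]_(m1, n)) (H : 'M_(m2, n)) (M : 'M_n) :
  (B <= H)%MS -> (\rank (B *m M *m B^T) <= \rank (H *m M *m H^T))%N.
Proof.
case/submxP => X ->.
have -> : X *m H *m M *m (X *m H)^T = X *m (H *m M *m H^T) *m X^T.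
  by rewrite trmx_mul !mulmxA.
exact: leq_trans (mxrankM_maxl _ _) (mxrankM_maxr _ _).
Qed.

Lemma zeros_gen n (G A : 'M[F]_n) lam x p eps k m (B : 'M[F]_(m, n)) :
  gen_cycle A lam x p -> adapted G A lam x p eps -> (k < p)%N ->
  diag_rep G A lam x p k B -> nzeros G A lam k B = k.
Proof.
move=> gc ad hk dr; have mp := m_eq_p gc ad hk dr.
case: dr => [fB [eB off]].
set d : 'rV[F]_m := \row_i kform G A lam k (row i B) (row i B).
have D := BMB off.
have rD : \rank (diag_mx d) = (p - k)%N.
  rewrite -D -(Ck_rank hk (eps_nz ad)) -(Hmx_Ck hk gc ad).
  move: eB => /andP [s1 s2].
  by apply/eqP; rewrite eqn_leq !rank_congr_le.
move: rD; rewrite rank_diag => rD.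
rewrite /nzeros cardsE.
have := cardC [pred i : 'I_m | kform G A lam k (row i B) (row i B) == 0].
rewrite card_ord.
have -> : #|[predC [pred i : 'I_m | kform G A lam k (row i B) (row i B) == 0]]|
        = #|[pred i | d 0 i != 0]|.
  by apply: eq_card => i; rewrite !inE mxE.
rewrite rD => h; rewrite (@eq_card _ _ [pred i : 'I_m | kform G A lam k (row i B) (row i B) == 0]) //; lia.
Qed.

End Cyc.


Section G2.
Variable F : fieldType.

Lemma sum_delta p (v : 'I_p -> F) i0 : \sum_i v i * (i0 == i)%:R = v i0.
Proof.
rewrite (bigD1 i0) //= big1 => [|i /negbTE h]; first by rewrite eqxx mulr1 addr0.
by rewrite eq_sym h mulr0.
Qed.

Lemma qC p k (hk : (k < p)%N) (eps : F) (w : 'rV[F]_p) :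
  (w *m Ck hk eps *m w^T) 0 0 =
  \sum_i w 0 i * ((k <= i)%N%:R * eps) * w 0 (fk hk i).
Proof.
rewrite mxE.
under eq_bigr do rewrite mxE mulr_suml.
rewrite exchange_big /=; apply: eq_bigr => i _.
rewrite -(sum_delta (fun j => w 0 i * ((k <= i)%N%:R * eps) * w 0 j)).
apply: eq_bigr => j _; rewrite /Ck mul_diag_mx !mxE; ring.
Qed.

Definition Mcon p c (g : 'I_c -> 'I_p) (a : 'I_c -> F) (f : 'I_p -> 'I_p) : 'M[F]_(p, c) :=
  \matrix_(i, j) ((g j == i)%:R - a j * (f (g j) == i)%:R).

Lemma Mcon_sol p c g a f (w : 'rV[F]_p) : w *m @Mcon p c g a f = 0 ->
  forall j, w 0 (g j) = a j * w 0 (f (g j)).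
Proof.
move=> /rowP h j; move: (h j); rewrite !mxE.
under eq_bigr do rewrite !mxE mulrBr.
rewrite sumrB sum_delta.
under eq_bigr do rewrite mulrCA.
rewrite -mulr_sumr sum_delta => /eqP; rewrite subr_eq0 => /eqP.
done.
Qed.

Lemma fk_val p k (hk : (k < p)%N) i :
  (fk hk i : nat) = if (k <= i)%N then (p.-1 + k - i)%N else (k.-1 - i)%N.
Proof. by []. Qed.

Lemma fk_ge p k (hk : (k < p)%N) (i : 'I_p) : (k <= i)%N -> (k <= fk hk i)%N.
Proof. move=> ki; rewrite fk_val ki; have := ltn_ord i; lia. Qed.

Definition condst (s : F) p k t :=
  (s = 1 /\ (t.*2 <= p - k <= t.*2.+1)%N) \/ (s = -1 /\ (p - k <= t.*2 <= (p - k).+1)%N).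

Lemma sym_all p k (hk : (k < p)%N) t (s : F) (w : 'rV[F]_p) :
  s * s = 1 -> condst s p k t ->
  (forall i : 'I_p, (k <= i < k + t)%N -> w 0 i = s * w 0 (fk hk i)) ->
  forall i : 'I_p, (k <= i)%N -> w 0 i = s * w 0 (fk hk i).
Proof.
move=> ss cd h i ki.
case: (ltnP i (k + t)) => it; first by apply: h; rewrite ki.
case: (ltnP (fk hk i) (k + t)) => ft.
  have := h (fk hk i); rewrite fk_ge // ft fkK => /(_ isT) ->.
  by rewrite mulrA ss mul1r.
have fi : fk hk i = i.
  apply: val_inj; move: ft; rewrite fk_val ki /=; have := ltn_ord i.
  case: cd => [[_ c]|[_ c]]; rewrite ki; lia.
rewrite fi; case: cd => [[-> _]|[_ c]]; first by rewrite mul1r.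
move: ft; rewrite fk_val ki; have := ltn_ord i; lia.
Qed.

Lemma q_sym p k (hk : (k < p)%N) (s eps : F) (w : 'rV[F]_p) :
  s * s = 1 ->
  (forall i : 'I_p, (k <= i)%N -> w 0 i = s * w 0 (fk hk i)) ->
  (w *m Ck hk eps *m w^T) 0 0 = eps * s * \sum_(i < p) (k <= i)%N%:R * w 0 i ^+ 2.
Proof.
move=> ss h; rewrite qC mulr_sumr; apply: eq_bigr => i _.
case: (leqP k i) => ki; last by rewrite !mul0r !mulr0 mul0r.
rewrite (h (fk hk i) (fk_ge hk ki)) fkK; ring.
Qed.

Lemma C_sub n (G A : 'M[F]_n) lam x p eps k (hk : (k < p)%N) c
    (g : 'I_c -> 'I_p) (a : 'I_c -> F) :
  gen_cycle A lam x p -> adapted G A lam x p eps ->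
  let W := kermx (Mcon g a (fk hk)) *m Hmx A lam x p in
  [/\ (W <= Hmx A lam x p)%MS, (p - c <= \rank W)%N &
   forall u, (u <= W)%MS -> exists w : 'rV_p,
     [/\ u = w *m Hmx A lam x p, w *m Mcon g a (fk hk) = 0 &
         (u *m ((Uop A lam) ^+ k *m G) *m u^T) 0 0 = (w *m Ck hk eps *m w^T) 0 0]].
Proof.
move=> gc ad W; split.
- exact: submxMl.
- rewrite /W mxrankMfree; last by apply: Hmx_free gc ad _; lia.
  by rewrite mxrank_ker leq_sub2l // rank_leq_col.
move=> u /submxP [c0 ->]; exists (c0 *m kermx (Mcon g a (fk hk))); split.
- by rewrite /W mulmxA.
- by rewrite -mulmxA mulmx_ker mulmx0.
rewrite -(Hmx_Ck hk gc ad) /W; rewrite !trmx_mul !mulmxA.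
done.
Qed.

Lemma gofs_lt p c off (hle : (off + c <= p)%N) (j : 'I_c) : (off + j < p)%N.
Proof. have := ltn_ord j; lia. Qed.

Definition gofs p c off (hle : (off + c <= p)%N) (j : 'I_c) : 'I_p :=
  Ordinal (gofs_lt hle j).

End G2.


Section Real.
Variable R : realFieldType.

Lemma key n (M : 'M[R]_n) a1 a2 h (W1 : 'M_(a1, n)) (W2 : 'M_(a2, n)) (H : 'M_(h, n)) :
  (W1 <= H)%MS -> (W2 <= H)%MS ->
  (forall u : 'rV_n, (u <= W1)%MS -> u != 0 -> (u *m M *m u^T) 0 0 < 0) ->
  (forall u : 'rV_n, (u <= W2)%MS -> 0 <= (u *m M *m u^T) 0 0) ->
  (\rank W1 + \rank W2 <= \rank H)%N.
Proof.
move=> s1 s2 neg pos.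
rewrite -mxrank_disjoint_sum.
  by apply: mxrankS; rewrite addsmx_sub s1 s2.
apply/eqP; rewrite -submx0; apply/row_subP => i.
set u := row i _.
have u1 : (u <= W1)%MS by rewrite (submx_trans (row_sub _ _)) // capmxSl.
have u2 : (u <= W2)%MS by rewrite (submx_trans (row_sub _ _)) // capmxSr.
case: (eqVneq u 0) => [->|nz]; first by rewrite sub0mx.
have := neg _ u1 nz; have := pos _ u2; lra.
Qed.

Lemma sqr_pos (y : R) : y != 0 -> 0 < y ^+ 2.
Proof. by move=> nz; rewrite lt_def sqr_ge0 andbT expf_eq0 /= nz. Qed.

Lemma B_q n (M : 'M[R]_n) m (B : 'M[R]_(m, n)) (d c : 'rV[R]_m) :
  B *m M *m B^T = diag_mx d ->
  ((c *m B) *m M *m (c *m B)^T) 0 0 = \sum_j c 0 j ^+ 2 * d 0 j.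
Proof.
move=> D.
have -> : c *m B *m M *m (c *m B)^T = c *m (B *m M *m B^T) *m c^T.
  by rewrite trmx_mul !mulmxA.
rewrite D mxE; apply: eq_bigr => j _; rewrite mul_mx_diag !mxE; ring.
Qed.

Lemma B_sub n (M : 'M[R]_n) m (B : 'M[R]_(m, n)) (d : 'rV[R]_m) (P : pred 'I_m) (u : 'rV[R]_n) :
  B *m M *m B^T = diag_mx d ->
  (u <= diag_mx (maskv P) *m B)%MS ->
  exists c : 'rV_m, [/\ u = c *m B, forall j, ~~ P j -> c 0 j = 0 &
     (u *m M *m u^T) 0 0 = \sum_j c 0 j ^+ 2 * d 0 j].
Proof.
move=> D /submxP [c0 ->]; exists (c0 *m diag_mx (maskv P)); split.
- by rewrite mulmxA.
- by move=> j /negbTE Pj; rewrite mul_mx_diag !mxE Pj mulr0.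
by rewrite mulmxA (B_q _ D).
Qed.

Lemma B_neg n (M : 'M[R]_n) m (B : 'M[R]_(m, n)) (d : 'rV[R]_m) (u : 'rV[R]_n) :
  B *m M *m B^T = diag_mx d ->
  (u <= diag_mx (maskv [pred i | (d 0 i < 0)%R]) *m B)%MS -> u != 0 ->
  (u *m M *m u^T) 0 0 < 0.
Proof.
move=> D /(B_sub D) [c [-> Pc ->]] nz.
case: (pickP (fun j => c 0 j != 0)) => [j nzj|all0]; last first.
  suff c0 : c = 0 by move: nz; rewrite c0 mul0mx eqxx.
  by apply/rowP => j; rewrite mxE; move: (all0 j) => /negbFE /eqP.
have dj : d 0 j < 0.
  apply: contraNT nzj => h; apply/eqP; exact: Pc.
rewrite (bigD1 j) //=.
have h1 : c 0 j ^+ 2 * d 0 j < 0 by rewrite pmulr_rlt0 // sqr_pos.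
have h2 : \sum_(i | i != j) c 0 i ^+ 2 * d 0 i <= 0.
  apply: sumr_le0 => i _.
  case: (ltP (d 0 i) 0) => di.
    by rewrite mulr_ge0_le0 ?sqr_ge0 ?ltW.
  by rewrite Pc ?expr0n ?mul0r //= -leNgt.
lra.
Qed.

Lemma B_nonneg n (M : 'M[R]_n) m (B : 'M[R]_(m, n)) (d : 'rV[R]_m) (u : 'rV[R]_n) :
  B *m M *m B^T = diag_mx d ->
  (u <= diag_mx (maskv [pred i | ~~ (d 0 i < 0)%R]) *m B)%MS ->
  0 <= (u *m M *m u^T) 0 0.
Proof.
move=> D /(B_sub D) [c [-> Pc ->]].
apply: sumr_ge0 => i _.
case: (ltP (d 0 i) 0) => di.
  by rewrite Pc ?expr0n ?mul0r //= negbK.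
by rewrite mulr_ge0 ?sqr_ge0.
Qed.

End Real.


Section Real2.
Variable R : realFieldType.

Lemma condst_le (s : R) p k t : condst s p k t -> (k < p)%N -> (k + t <= p)%N.
Proof. by case=> [[_ c]|[_ c]]; lia. Qed.

Lemma C_psd n (G A : 'M[R]_n) lam x p eps k (hk : (k < p)%N) (s : R) t :
  gen_cycle A lam x p -> adapted G A lam x p eps ->
  s * s = 1 -> condst s p k t -> eps * s = 1 ->
  exists W : 'M_(p, n), [/\ (W <= Hmx A lam x p)%MS, (p - t <= \rank W)%N &
    forall u : 'rV[R]_n, (u <= W)%MS -> 0 <= (u *m ((Uop A lam) ^+ k *m G) *m u^T) 0 0].
Proof.
move=> gc ad ss cd es.
have hle : (k + t <= p)%N by exact: condst_le cd hk.
have := C_sub hk (gofs hle) (fun _ => s) gc ad; move=> /= [sW rW qW].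
eexists; split; [exact: sW | exact: rW | ].
move=> u /qW [w [_ wM ->]].
have sol := Mcon_sol wM.
have hs : forall i : 'I_p, (k <= i < k + t)%N -> w 0 i = s * w 0 (fk hk i).
  move=> i /andP [i1 i2].
  have jl : (i - k < t)%N by lia.
  have := sol (Ordinal jl).
  have -> : gofs hle (Ordinal jl) = i by apply: val_inj => /=; lia.
  done.
rewrite (q_sym eps ss (sym_all ss cd hs)) es mul1r.
apply: sumr_ge0 => i _; exact: mulr_ge0 (ler0n _ _) (sqr_ge0 _).
Qed.

Lemma C_neg n (G A : 'M[R]_n) lam x p eps k (hk : (k < p)%N) (s : R) t :
  gen_cycle A lam x p -> adapted G A lam x p eps ->
  s * s = 1 -> condst s p k t -> eps * s = -1 ->
  exists W : 'M_(p, n), [/\ (W <= Hmx A lam x p)%MS, (p - (k + t) <= \rank W)%N &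
    forall u : 'rV[R]_n, (u <= W)%MS -> u != 0 -> (u *m ((Uop A lam) ^+ k *m G) *m u^T) 0 0 < 0].
Proof.
move=> gc ad ss cd es.
have hle : (0 + (k + t) <= p)%N by rewrite add0n; exact: condst_le cd hk.
have := C_sub hk (gofs hle) (fun j => if (j < k)%N then 0 else s) gc ad; move=> /= [sW rW qW].
eexists; split; [exact: sW | exact: rW | ].
move=> u /qW [w [uw wM ->]] nz.
have sol := Mcon_sol wM.
have hz : forall i : 'I_p, (i < k)%N -> w 0 i = 0.
  move=> i ik.
  have jl : (i < k + t)%N by lia.
  have := sol (Ordinal jl).
  have -> : gofs hle (Ordinal jl) = i by apply: val_inj => /=; lia.
  by rewrite /= ik mul0r.
have hs : forall i : 'I_p, (k <= i < k + t)%N -> w 0 i = s * w 0 (fk hk i).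
  move=> i /andP [i1 i2].
  have := sol (Ordinal i2).
  have -> : gofs hle (Ordinal i2) = i by apply: val_inj => /=; lia.
  by rewrite /= ltnNge i1.
rewrite (q_sym eps ss (sym_all ss cd hs)) es mulN1r oppr_lt0.
case: (pickP (fun j => w 0 j != 0)) => [j nzj|all0]; last first.
  suff w0 : w = 0 by move: nz; rewrite uw w0 mul0mx eqxx.
  by apply/rowP => j; rewrite mxE; move: (all0 j) => /negbFE /eqP.
have kj : (k <= j)%N by rewrite leqNgt; apply: contra nzj => /hz ->.
rewrite (bigD1 j) //= kj mul1r.
have h1 := sqr_pos nzj.
have h2 : 0 <= \sum_(i | i != j) (k <= i)%N%:R * w 0 i ^+ 2.
  by apply: sumr_ge0 => i _; exact: mulr_ge0 (ler0n _ _) (sqr_ge0 _).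
lra.
Qed.

End Real2.


Lemma negs_main (R : realFieldType) n (G A : 'M[R]_n) lam x p eps k m (B : 'M[R]_(m, n)) :
  gen_cycle A lam x p -> adapted G A lam x p eps -> (k < p)%N ->
  diag_rep G A lam x p k B ->
  nnegs G A lam k B =
    (if eps == -1 then ((p - k).+1)./2%N else ((p - k) - ((p - k).+1)./2)%N).
Proof.
move=> gc ad hk dr.
have mp := m_eq_p gc ad hk dr; subst m.
case: (dr) => fB [eB off].
set d : 'rV[R]_p := \row_i kform G A lam k (row i B) (row i B).
have D := BMB off.
have sBH : (B <= Hmx A lam x p)%MS by case/andP: eB.
have rH : \rank (Hmx A lam x p) = p by apply/eqP; apply: Hmx_free gc ad _; lia.
pose Pn := [pred i : 'I_p | d 0 i < 0].
pose Pnn := [pred i : 'I_p | ~~ (d 0 i < 0)].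
have cn : nnegs G A lam k B = #|Pn|.
  by rewrite /nnegs cardsE; apply: eq_card => i; rewrite !inE /Pn /= mxE.
have cnn : #|Pnn| = (p - #|Pn|)%N.
  have := cardC Pn; rewrite card_ord => h.
  have -> : #|Pnn| = #|[predC Pn]| by apply: eq_card => i; rewrite !inE.
  apply/eqP; rewrite -(eqn_add2l #|Pn|) h subnKC //; by have := max_card Pn; rewrite card_ord.
pose W1 := diag_mx (maskv Pn) *m B.
pose W2 := diag_mx (maskv Pnn) *m B.
have sW1 : (W1 <= Hmx A lam x p)%MS by apply: submx_trans (submxMl _ _) sBH.
have sW2 : (W2 <= Hmx A lam x p)%MS by apply: submx_trans (submxMl _ _) sBH.
have rW1 : \rank W1 = #|Pn| by apply: mask_rankM.
have rW2 : \rank W2 = #|Pnn| by apply: mask_rankM.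
have nW1 : forall u : 'rV[R]_n, (u <= W1)%MS -> u != 0 ->
    (u *m ((Uop A lam) ^+ k *m G) *m u^T) 0 0 < 0.
  by move=> u hu nz; apply: (B_neg D hu nz).
have pW2 : forall u : 'rV[R]_n, (u <= W2)%MS ->
    0 <= (u *m ((Uop A lam) ^+ k *m G) *m u^T) 0 0.
  by move=> u hu; apply: (B_nonneg D hu).
have h1m1 : ((1 : R) == -1) = false by apply/eqP; lra.
have c1 : @condst R 1 p k ((p - k)./2)%N by left; split => //; apply/andP; split; lia.
have c2 : @condst R (-1) p k ((p - k).+1./2)%N by right; split => //; apply/andP; split; lia.
rewrite cn; case: ad.1 => e1.
- have [Wp [sp rp qp]] := C_psd (s := 1) (t := ((p - k)./2)%N) hk gc ad (mulr1 1)
     c1 ltac:(by rewrite e1 mulr1).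
  have [Wn [sn rn qn]] := C_neg (s := -1) (t := ((p - k).+1./2)%N) hk gc ad
     ltac:(by rewrite mulrNN mulr1) c2
     ltac:(by rewrite e1 mul1r).
  have k1 := key sW1 sp nW1 qp.
  have k2 := key sn sW2 qn pW2.
  rewrite rW1 rH in k1; rewrite rW2 cnn rH in k2.
  rewrite e1 h1m1; lia.
- have [Wp [sp rp qp]] := C_psd (s := -1) (t := ((p - k).+1./2)%N) hk gc ad
     ltac:(by rewrite mulrNN mulr1) c2
     ltac:(by rewrite e1 mulrNN mulr1).
  have [Wn [sn rn qn]] := C_neg (s := 1) (t := ((p - k)./2)%N) hk gc ad
     (mulr1 1) c1 ltac:(by rewrite e1 mulr1).
  have k1 := key sW1 sp nW1 qp.
  have k2 := key sn sW2 qn pW2.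
  rewrite rW1 rH in k1; rewrite rW2 cnn rH in k2.
  rewrite e1 eqxx; lia.
Qed.


Local Open Scope complex_scope.

Theorem mainTheorem7 (R : realType) :
  (* real scalar product spaces, real eigenvalue *)
  (forall (n : nat) (G A : 'M[R]_n) (lam : R) (x : 'rV[R]_n) (p : nat)
          (eps : R) (k m : nat) (B : 'M[R]_(m, n)),
     scalar_product G -> self_adjoint G A -> is_eigenvalue A lam ->
     gen_cycle A lam x p -> adapted G A lam x p eps ->
     (k < p)%N -> diag_rep G A lam x p k B ->
     nzeros G A lam k B = k /\
     nnegs G A lam k B =
       (if eps == -1 then ((p - k).+1)./2%N else ((p - k) - ((p - k).+1)./2)%N))
  /\
  (* complex scalar product spaces (also covering complexifications) *)
  (forall (n : nat) (G A : 'M[R[i]]_n) (lam : R[i]) (x : 'rV[R[i]]_n)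
          (p : nat) (eps : R[i]) (k m : nat) (B : 'M[R[i]]_(m, n)),
     scalar_product G -> self_adjoint G A -> is_eigenvalue A lam ->
     gen_cycle A lam x p -> adapted G A lam x p eps ->
     (lam \is Num.real \/ eps = 1) ->
     (k < p)%N -> diag_rep G A lam x p k B ->
     nzeros G A lam k B = k).
Proof.
split.
  move=> n G A lam x p eps k m B _ _ _ gc ad hk dr; split.
    exact: zeros_gen gc ad hk dr.
  exact: negs_main gc ad hk dr.
move=> n G A lam x p eps k m B _ _ _ gc ad _ hk dr.
exact: zeros_gen gc ad hk dr.
Qed.
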